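(* Fix $\eta>0$, $\lambda\in\mathbb{R}^{2md}$, $e\in E$, $i\in e$, and let $\lambda'$ be obtained from $\lambda$ by replacing only the block $\lambda_{e,i}$ with $\lambda'_{e,i}(x)=\lambda_{e,i}(x)+\frac{1}{2\eta}\log\frac{S^\lambda_{e,i}(x)}{\mu^\lambda_i(x)}$ ($x\in\chi$). Then $$L(\lambda)-L(\lambda')\ \ge\ \frac{1}{4\eta}\|\nu^\lambda_{e,i}\|_1^2.$$
   Context: Let $G=(V,E)$ be a finite undirected graph with $n=|V|$, $m=|E|$, every vertex incident to at least one edge; $N_i=\{e\in E:i\in e\}$. $\chi$ is a finite label set with $d=|\chi|\ge2$. Costs $C_i\in\mathbb{R}^\chi$, $C_e\in\mathbb{R}^{\chi^2}$; for $e=\{i,j\}$, $x_e=(x_i,x_j)$ and $(x_e)_i=x_i$. Dual variables $\lambda=(\lambda_{e,i}(x))_{e\in E,i\in e,x\in\chi}\in\mathbb{R}^{2md}$ and $$L(\lambda)=\frac1\eta\sum_{i\in V}\log\sum_{x\in\chi}\exp\Big(-\eta C_i(x)+\eta\sum_{e\in N_i}\lambda_{e,i}(x)\Big)+\frac1\eta\sum_{e\in E}\log\sum_{x_e\in\chi^2}\exp\Big(-\eta C_e(x_e)-\eta\sum_{i\in e}\lambda_{e,i}((x_e)_i)\Big).$$ $\mu^\lambda_i(x)\propto\exp(-\eta C_i(x)+\eta\sum_{e\in N_i}\lambda_{e,i}(x))$, $\mu^\lambda_e(x_e)\propto\exp(-\eta C_e(x_e)-\eta\sum_{i\in e}\lambda_{e,i}((x_e)_i))$,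 each normalized to sum to $1$; $S^\lambda_{e,i}(x)=\sum_{x_e:(x_e)_i=x}\mu^\lambda_e(x_e)$; the slack vector is $\nu^\lambda_{e,i}=S^\lambda_{e,i}-\mu^\lambda_i\in\mathbb{R}^\chi$ (so $\partial L/\partial\lambda_{e,i}(x)=-\nu^\lambda_{e,i}(x)$). *)

(* Defs.v *)
From mathcomp Require Import all_boot all_order all_algebra.
From mathcomp Require Import reals.
From mathcomp Require Import sequences exp.
Set Implicit Arguments. Unset Strict Implicit. Unset Printing Implicit Defensive.
Import Order.TTheory GRing.Theory Num.Theory.
Local Open Scope ring_scope.

(* Graph: vertices V, edges E; each edge e = {i,j} is given with a fixed
   orientation ends e = (i, j) so that x_e = (x_i, x_j) and C_e : chi^2 -> R
   make sense.  endpoint e false = i, endpoint e true = j. *)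
Section Defs.
Variables (R : realType) (V E X : finType) (ends : E -> V * V).

Definition endpoint (e : E) (b : bool) : V := if b then (ends e).2 else (ends e).1.

Definition simple_graph_cover : Prop :=
  [/\ (forall e, (ends e).1 != (ends e).2),
      (forall e f, [set (ends e).1; (ends e).2] = [set (ends f).1; (ends f).2] -> e = f)
    & (forall i, exists e b, endpoint e b = i)].

(* dual variables lambda_{e,i}(x), with i = endpoint e b : a vector in R^{2md} *)
Definition dual := E -> bool -> X -> R.

Variables (eta : R) (Cv : V -> X -> R) (Ce : E -> X -> X -> R).

Definition vpot (lam : dual) (i : V) (x : X) : R :=
  - eta * Cv i x + eta * \sum_(p : E * bool | endpoint p.1 p.2 == i) lam p.1 p.2 x.

Definition epot (lam : dual) (e : E) (xe : X * X) : R :=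
  - eta * Ce e xe.1 xe.2 - eta * (lam e false xe.1 + lam e true xe.2).

Definition Lfun (lam : dual) : R :=
  eta^-1 * \sum_(i : V) ln (\sum_(x : X) expR (vpot lam i x))
  + eta^-1 * \sum_(e : E) ln (\sum_(xe : X * X) expR (epot lam e xe)).

Definition mu_v (lam : dual) (i : V) (x : X) : R :=
  expR (vpot lam i x) / \sum_(y : X) expR (vpot lam i y).

Definition mu_e (lam : dual) (e : E) (xe : X * X) : R :=
  expR (epot lam e xe) / \sum_(ye : X * X) expR (epot lam e ye).

Definition comp (b : bool) (xe : X * X) : X := if b then xe.2 else xe.1.

Definition Smarg (lam : dual) (e : E) (b : bool) (x : X) : R :=
  \sum_(xe : X * X | comp b xe == x) mu_e lam e xe.

Definition slack (lam : dual) (e : E) (b : bool) (x : X) : R :=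
  Smarg lam e b x - mu_v lam (endpoint e b) x.

Definition update (lam : dual) (e : E) (b : bool) : dual :=
  fun e' b' x =>
    if (e' == e) && (b' == b) then
      lam e b x + (2 * eta)^-1 * ln (Smarg lam e b x / mu_v lam (endpoint e b) x)
    else lam e' b' x.

Definition norm1 (v : X -> R) : R := \sum_(x : X) `|v x|.

End Defs.

(* Main.v *)
Require Import Defs.
From mathcomp Require Import all_boot all_order all_algebra.
From mathcomp Require Import reals sequences exp.
From mathcomp Require Import ring lra.
Import Order.TTheory GRing.Theory Num.Theory.
Local Open Scope ring_scope.

Lemma sum_gt0 (R : realType) (T : finType) (F : T -> R) (t : T) :
  (forall x, 0 < F x) -> 0 < \sum_x F x.
Proof.
move=> H; rewrite (bigD1 t) //=.
have : 0 <= \sum_(i | i != t) F i by apply: sumr_ge0 => i _; apply: ltW.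
have := H t; lra.
Qed.

Lemma ln_ineq (R : realType) (t : R) : 0 < t -> 1 - t <= - ln t.
Proof.
move=> t0; have := expR_ge1Dx (ln t); rewrite lnK ?posrE //; lra.
Qed.

Lemma wcs (R : realType) (T : finType) (w u v : T -> R) :
  (forall x, 0 <= w x) -> 0 < \sum_x w x * v x ^+ 2 ->
  (\sum_x w x * u x * v x) ^+ 2 <=
  (\sum_x w x * u x ^+ 2) * (\sum_x w x * v x ^+ 2).
Proof.
move=> w0; set A := \sum_x w x * u x ^+ 2; set B := \sum_x w x * v x ^+ 2;
  set C := \sum_x w x * u x * v x => B0.
pose t := C / B.
have H : 0 <= \sum_x w x * (u x - t * v x) ^+ 2.
  by apply: sumr_ge0 => x _; apply: mulr_ge0 => //; apply: sqr_ge0.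
have E : \sum_x w x * (u x - t * v x) ^+ 2 = A - 2 * t * C + t ^+ 2 * B.
  rewrite /A /B /C !mulr_sumr -sumrB -big_split /=.
  by apply: eq_bigr => x _; ring.
rewrite E /t in H.
have HB : B != 0 by rewrite gt_eqF.
have : 0 <= (A - C ^+ 2 / B) * B.
  apply: mulr_ge0; last exact: ltW.
  move: H; congr (0 <= _); field; exact: HB.
move=> h; have e : (A - C ^+ 2 / B) * B = A * B - C ^+ 2 by field; exact: HB.
rewrite e in h; lra.
Qed.

Lemma normh (R : realType) (a c d : R) : 0 <= a -> 0 <= d ->
  `|a * c * d| = a * `|c| * d.
Proof. by move=> a0 d0; rewrite !normrM (ger0_norm a0) (ger0_norm d0). Qed.

Lemma part (R : realType) (X : finType) (b : bool) (F : X * X -> R) :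
  \sum_xe F xe = \sum_x \sum_(xe | Defs.comp b xe == x) F xe.
Proof. by rewrite (partition_big (Defs.comp b) predT). Qed.

Theorem lemma1 (R : realType) (V E X : finType) (ends : E -> V * V)
  (Cv : V -> X -> R) (Ce : E -> X -> X -> R) (eta : R) (lam : dual R E X)
  (e : E) (b : bool) :
  simple_graph_cover ends -> (1 < #|X|)%N -> 0 < eta ->
  Lfun ends eta Cv Ce lam - Lfun ends eta Cv Ce (update ends eta Cv Ce lam e b)
    >= (4 * eta)^-1 * (norm1 (slack ends eta Cv Ce lam e b)) ^+ 2.
Proof.
move=> _ cardX eta0.
have [x0 _] : exists x0 : X, true.
  by case/card_gt0P: (ltnW cardX) => x _; exists x.
set i := endpoint ends e b.
set mu := mu_v ends eta Cv lam i.
set S := Smarg eta Ce lam e b.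
set D := fun x => (2 * eta)^-1 * ln (S x / mu x).
set g := fun x => expR (eta * D x).
set Zv := \sum_y expR (vpot ends eta Cv lam i y).
set Ze := \sum_ye expR (epot eta Ce lam e ye).
have Zv0 : 0 < Zv by rewrite /Zv; apply: (@sum_gt0 _ _ _ x0) => y; apply: expR_gt0.
have Ze0 : 0 < Ze by rewrite /Ze; apply: (@sum_gt0 _ _ _ (x0, x0)) => y; apply: expR_gt0.
have mu0 x : 0 < mu x by rewrite /mu /mu_v divr_gt0 // expR_gt0.
have mue0 xe : 0 < mu_e eta Ce lam e xe by rewrite /mu_e divr_gt0 // expR_gt0.
have S0 x : 0 < S x.
  rewrite /S /Smarg (bigD1 (x, x)) /=; last by case: (b).
  apply: (lt_le_trans (mue0 (x,x))); rewrite lerDl.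
  by apply: sumr_ge0 => y _; apply: ltW.
have g0 x : 0 < g x by apply: expR_gt0.
have g2 x : S x = mu x * g x ^+ 2.
  rewrite /g -expRM_natl /D.
  have -> : 2%:R * (eta * ((2 * eta)^-1 * ln (S x / mu x))) = ln (S x / mu x).
    by field; rewrite ?expR_eq0 ?gt_eqF // ?expR_gt0.
  by rewrite lnK ?posrE ?divr_gt0 ?expR_gt0 // (@mulrC R (mu x)) divfK // gt_eqF.
have sum_mu : \sum_x mu x = 1.
  by rewrite /mu /mu_v -mulr_suml -/Zv divff // gt_eqF.
have sum_S : \sum_x S x = 1.
  by rewrite /S /Smarg -part /mu_e -mulr_suml -/Ze divff // gt_eqF.
set BC := \sum_x mu x * g x.
have BC0 : 0 < BC by apply: (@sum_gt0 _ _ _ x0) => x; apply: mulr_gt0.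
set lam' := update ends eta Cv Ce lam e b.
have upd e' b' x : lam' e' b' x = lam e' b' x + (if (e' == e) && (b' == b) then D x else 0).
  rewrite /lam' /update; case: ifP => [/andP[/eqP-> /eqP->]|]; by rewrite ?addr0.
have vupd j x : vpot ends eta Cv lam' j x
    = vpot ends eta Cv lam j x + (if j == i then eta * D x else 0).
  rewrite /vpot; under eq_bigr => p _ do rewrite upd.
  rewrite big_split /= -big_mkcondr /=.
  case: eqP => [->|ne].
    rewrite [X in eta * (_ + X)](big_pred1 (e, b)); first by rewrite mulrDr addrA.
    move=> [e' b'] /=; rewrite xpair_eqE.
    case: (e' =P e) => [->|]; case: (b' =P b) => [->|]; by rewrite /= ?andbF ?eqxx.
  rewrite [X in eta * (_ + X)]big_pred0 ?addr0 // => -[e' b'] /=.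
  case: (e' =P e) => [->|]; case: (b' =P b) => [->|]; rewrite /= ?andbF ?andbT //.
  by apply/eqP => h; apply: ne.
have eupd f xe : epot eta Ce lam' f xe
    = epot eta Ce lam f xe - (if f == e then eta * D (Defs.comp b xe) else 0).
  rewrite /epot !upd; case: (f =P e) => [->|_]; last by rewrite /= !addr0 subr0.
  rewrite /Defs.comp /=.
  by case: (boolP b) => _ /=; rewrite ?addr0; ring.
have hZi : \sum_x expR (vpot ends eta Cv lam' i x) = Zv * BC.
  rewrite /BC mulr_sumr; apply: eq_bigr => x _.
  rewrite vupd eqxx expRD /mu /mu_v -/Zv /g.
  by field; rewrite ?expR_eq0 ?gt_eqF // ?expR_gt0.
have hZj j : j != i -> \sum_x expR (vpot ends eta Cv lam' j x)
    = \sum_x expR (vpot ends eta Cv lam j x).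
  by move=> ne; apply: eq_bigr => x _; rewrite vupd (negbTE ne) addr0.
have hZe : \sum_xe expR (epot eta Ce lam' e xe) = Ze * BC.
  rewrite (@part _ _ b) /BC mulr_sumr; apply: eq_bigr => x _.
  transitivity (Ze * S x / g x); last first.
    by rewrite g2; field; rewrite ?expR_eq0 ?gt_eqF // ?expR_gt0.
  rewrite /S /Smarg mulr_sumr mulr_suml; apply: eq_bigr => xe /eqP hx.
  rewrite eupd eqxx expRB hx /mu_e -/Ze /g.
  by field; rewrite ?expR_eq0 ?gt_eqF // ?expR_gt0.
have hZf f : f != e -> \sum_xe expR (epot eta Ce lam' f xe)
    = \sum_xe expR (epot eta Ce lam f xe).
  by move=> ne; apply: eq_bigr => y _; rewrite eupd (negbTE ne) subr0.
have hv : \sum_j ln (\sum_x expR (vpot ends eta Cv lam' j x))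
    = \sum_j ln (\sum_x expR (vpot ends eta Cv lam j x)) + ln BC.
  rewrite (bigD1 i) //= [in RHS](bigD1 i) //= hZi lnM ?posrE // -/Zv.
  rewrite (eq_bigr (fun j => ln (\sum_x expR (vpot ends eta Cv lam j x)))); first lra.
  by move=> j ne; rewrite hZj.
have he : \sum_f ln (\sum_xe expR (epot eta Ce lam' f xe))
    = \sum_f ln (\sum_xe expR (epot eta Ce lam f xe)) + ln BC.
  rewrite (bigD1 e) //= [in RHS](bigD1 e) //= hZe lnM ?posrE // -/Ze.
  rewrite (eq_bigr (fun f => ln (\sum_xe expR (epot eta Ce lam f xe)))); first lra.
  by move=> f ne; rewrite hZf.
have -> : Lfun ends eta Cv Ce lam - Lfun ends eta Cv Ce lam' = eta^-1 * (-2 * ln BC).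
  by rewrite /Lfun hv he; ring.
have hN : norm1 (slack ends eta Cv Ce lam e b) = \sum_x mu x * `|g x - 1| * (g x + 1).
  apply: eq_bigr => x _; rewrite /slack -/i -/mu -/S g2.
  have -> : mu x * g x ^+ 2 - mu x = mu x * (g x - 1) * (g x + 1) by ring.
  apply: normh; first exact: ltW.
  by have := g0 x; lra.
have e1 : \sum_x mu x * `|g x - 1| ^+ 2 = 2 - 2 * BC.
  rewrite (eq_bigr (fun x => S x - 2 * (mu x * g x) + mu x)); last first.
    by move=> x _; rewrite real_normK ?num_real // g2; ring.
  rewrite big_split /= sumrB sum_S sum_mu -mulr_sumr -/BC; lra.
have e2 : \sum_x mu x * (g x + 1) ^+ 2 = 2 + 2 * BC.
  rewrite (eq_bigr (fun x => S x + 2 * (mu x * g x) + mu x)); last first.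
    by move=> x _; rewrite g2; ring.
  rewrite !big_split /= sum_S sum_mu -mulr_sumr -/BC; lra.
have cs : norm1 (slack ends eta Cv Ce lam e b) ^+ 2 <= (2 - 2 * BC) * (2 + 2 * BC).
  rewrite -e1 -e2 hN.
  apply: (@wcs R X mu (fun x => `|g x - 1|) (fun x => g x + 1)).
    by move=> x; apply: ltW.
  by rewrite e2; lra.
have hl := @ln_ineq R _ (exprn_gt0 2 BC0).
rewrite lnXn // mulr2n in hl.
set N := norm1 _ in cs *.
have key : N ^+ 2 / 4 <= -2 * ln BC.
  have : (2 - 2 * BC) * (2 + 2 * BC) = 4 * (1 - BC ^+ 2) by ring.
  lra.
have -> : (4 * eta)^-1 * N ^+ 2 = eta^-1 * (N ^+ 2 / 4).
  by field; rewrite ?expR_eq0 ?gt_eqF // ?expR_gt0.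
by apply: ler_wpM2l => //; rewrite invr_ge0 ltW.
Qed.
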